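(* Let $\Delta$ be a $K$-dissection diagram on a compact surface $S$, and let $\alpha,\beta$ be two intersecting closed curves on $S$ (transverse to $\Delta$). Let $\gamma$ be the commutator $[\alpha,\beta]$ based at an intersection point of $\alpha$ and $\beta$. Then $\mathrm{effcont}(\gamma)\subseteq[\mathrm{cont}(\alpha),\mathrm{cont}(\beta)]$.
   Context: A $K$-dissection diagram on $(S,\partial S)$: finite collection of essential simple closed curves and properly embedded essential arcs, in minimal position, transversely oriented and labeled by vertices of $K$, curves with equal labels disjoint, intersecting only if labels adjacent. For a loop $\gamma$ and a point $*$ on it, $\phi_*(\gamma)\in A(K)$ is the product of labels of curves/arcs crossed along $\gamma$ from $*$ (exponents $\pm1$ by transverse orientation). $\mathrm{cont}(\gamma)$ is the set of labels crossed by $\gamma$; $\mathrm{rcont}_*(\gamma)$ is the smallest vertex set $V$ with $\phi_*(\gamma)\in A(V)$. Vertex sets $P,Q$ are adjacent if for all $p\in P,q\in Q$, $p=q$ or $p,q$ adjacent. $\mathrm{effcont}(\gamma)$ is the smallest subset $Z\subseteq\mathrm{cont}(\gamma)$ such that $Z\supseteq\mathrm{rcont}_*(\gamma)$ for every point $*\in\gamma$ and $\mathrm{cont}(\gamma)\setminus Z$ is adjacent to $Z$. For vertex sets $U,V$: write $U$ as the join of its anti-components $U_i$ (vertex sets of components of the complement of the induced subgraph on $U$) and likewise $V$; $U''$ is the union of those $U_i$ not adjacent to $V$, $V''$ the union of those $V_j$ not adjacent to $U$, and $[U,V]=U''\cup V''$. *)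

(* Defs.v *)
(* Combinatorial model of crossing words of loops w.r.t. a
   K-dissection diagram, and the right-angled Artin group A(K). *)
From mathcomp Require Import all_boot.
From mathcomp Require Import boolp.
From Stdlib Require Import Relations.
Set Implicit Arguments. Unset Strict Implicit. Unset Printing Implicit Defensive.

Section Dissection.
Variables (V : finType) (adj : rel V).

(* A letter: (label v, exponent) ; true = +1, false = -1. *)
Definition letter := (V * bool)%type.
Definition word := seq letter.

Definition linv (x : letter) : letter := (x.1, ~~ x.2).
Definition winv (w : word) : word := rev (map linv w).

Inductive raag_step : word -> word -> Prop :=
| raag_cancel u v x : raag_step (u ++ [:: x; linv x] ++ v) (u ++ v)
| raag_comm u v a b : adj a.1 b.1 -> raag_step (u ++ [:: a; b] ++ v) (u ++ [:: b; a] ++ v).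

Definition raag_eq : word -> word -> Prop := clos_refl_sym_trans word raag_step.

Definition inA (w : word) (W : {set V}) : Prop :=
  exists w', raag_eq w w' /\ all (fun x : letter => x.1 \in W) w'.

Definition cont (w : word) : {set V} := [set v | has (fun x : letter => x.1 == v) w].

Definition rcont (w : word) : {set V} :=
  \bigcap_(W : {set V} | `[< inA w W >]) W.

Definition adjacent (P Q : {set V}) : bool :=
  [forall p in P, forall q in Q, (p == q) || adj p q].

(* effective content of a loop with cyclic crossing word g: points * on the
   loop correspond to rotations of g *)
Definition effcont_ok (g : word) (Z : {set V}) : bool :=
  [&& Z \subset cont g,
      [forall k : 'I_(size g).+1, rcont (rot k g) \subset Z] &
      adjacent (cont g :\: Z) Z].

Definition effcont (g : word) : {set V} :=
  \bigcap_(Z : {set V} | effcont_ok g Z) Z.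

Definition nadj_in (U : {set V}) : rel V :=
  fun u u' => [&& u \in U, u' \in U, u != u' & ~~ adj u u'].

Definition anticomp (U : {set V}) (u : V) : {set V} :=
  [set u' in U | connect (nadj_in U) u u'].

Definition nonadj_part (U W : {set V}) : {set V} :=
  [set u in U | ~~ adjacent (anticomp U u) W].

Definition bracket (U W : {set V}) : {set V} :=
  nonadj_part U W :|: nonadj_part W U.

End Dissection.

(* Main.v *)
Require Import Defs.
From mathcomp Require Import all_boot.
Set Implicit Arguments. Unset Strict Implicit. Unset Printing Implicit Defensive.

Section Helpers.
Variables (V : finType) (adj : rel V).
Hypothesis adj_sym : symmetric adj.

Local Notation req := (raag_eq adj).

Lemma step_ctx x y u u' : raag_step adj u u' -> raag_step adj (x ++ u ++ y) (x ++ u' ++ y).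
Proof.
case=> [a b c|a b c d H].
- have -> : x ++ (a ++ [:: c; linv c] ++ b) ++ y = (x ++ a) ++ [:: c; linv c] ++ (b ++ y).
    by rewrite !catA.
  have -> : x ++ (a ++ b) ++ y = (x ++ a) ++ (b ++ y) by rewrite !catA.
  exact: raag_cancel.
- have -> : x ++ (a ++ [:: c; d] ++ b) ++ y = (x ++ a) ++ [:: c; d] ++ (b ++ y).
    by rewrite !catA.
  have -> : x ++ (a ++ [:: d; c] ++ b) ++ y = (x ++ a) ++ [:: d; c] ++ (b ++ y).
    by rewrite !catA.
  exact: raag_comm.
Qed.

Lemma req_ctx x y u u' : req u u' -> req (x ++ u ++ y) (x ++ u' ++ y).
Proof.
elim=> [a b H|a|a b _ IH|a b c _ IH1 _ IH2].
- apply: Relation_Operators.rst_step; exact: step_ctx.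
- exact: Relation_Operators.rst_refl.
- exact: Relation_Operators.rst_sym.
- exact: Relation_Operators.rst_trans IH1 IH2.
Qed.

Lemma req_refl u : req u u. Proof. exact: Relation_Operators.rst_refl. Qed.
Lemma req_symm u v : req u v -> req v u. Proof. exact: Relation_Operators.rst_sym. Qed.
Lemma req_tr u v w : req u v -> req v w -> req u w. Proof. exact: Relation_Operators.rst_trans. Qed.

Lemma req_catl w u u' : req u u' -> req (w ++ u) (w ++ u').
Proof. by move=> H; have := req_ctx w [::] H; rewrite !cats0. Qed.

Lemma req_catr w u u' : req u u' -> req (u ++ w) (u' ++ w).
Proof. by move=> H; have := req_ctx [::] w H. Qed.

Lemma req_cancel x : req [:: x; linv x] [::].
Proof. apply: Relation_Operators.rst_step; have := raag_cancel adj [::] [::] x; by []. Qed.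

Lemma req_swap x y : (x.1 == y.1) || adj x.1 y.1 -> req [:: x; y] [:: y; x].
Proof.
case/orP => H.
- case: x y H => [a e] [b f] /= /eqP <-.
  case: e; case: f; try exact: req_refl.
  + apply: req_tr (req_cancel (a, true)) _; apply: req_symm; exact: (req_cancel (a, false)).
  + apply: req_tr (req_cancel (a, false)) _; apply: req_symm; exact: (req_cancel (a, true)).
- apply: Relation_Operators.rst_step; have := raag_comm [::] [::] H; by [].
Qed.

Lemma req_letter_word x v : (forall y, y \in v -> (x.1 == y.1) || adj x.1 y.1) ->
  req (x :: v) (rcons v x).
Proof.
elim: v => [|y v IH] H /=; first exact: req_refl.
apply: (@req_tr _ (y :: x :: v)).
  have := req_catr v (req_swap (H y (mem_head _ _))); by [].
have := req_catl [:: y] (IH (fun z hz => H z ltac:(by rewrite inE hz orbT))); by [].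
Qed.

Lemma req_comm u v : (forall x y, x \in u -> y \in v -> (x.1 == y.1) || adj x.1 y.1) ->
  req (u ++ v) (v ++ u).
Proof.
elim: u => [|x u IH] H /=; first by rewrite cats0; exact: req_refl.
apply: (@req_tr _ (x :: v ++ u)).
  have := req_catl [:: x] (IH (fun a b ha hb => H a b ltac:(by rewrite inE ha orbT) hb)); by [].
rewrite -cat_rcons.
have := req_catr u (req_letter_word (fun y hy => H x y (mem_head _ _) hy)); by [].
Qed.

Lemma req_inv w : req (w ++ winv w) [::].
Proof.
elim: w => [|x w IH]; first exact: req_refl.
have -> : (x :: w) ++ winv (x :: w) = [:: x] ++ (w ++ winv w) ++ [:: linv x].
  by rewrite /winv /= rev_cons -cats1 !catA.
apply: req_tr (req_ctx _ _ IH) _; exact: req_cancel.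
Qed.

Lemma req_filter (P : pred (letter V)) w :
  (forall x y, x \in w -> y \in w -> P x -> ~~ P y -> (x.1 == y.1) || adj x.1 y.1) ->
  req w (filter P w ++ filter (predC P) w).
Proof.
elim: w => [|x w IH] H /=; first exact: req_refl.
have H' : forall a b, a \in w -> b \in w -> P a -> ~~ P b -> (a.1 == b.1) || adj a.1 b.1.
  by move=> a b ha hb; apply: H; rewrite inE ?ha ?hb orbT.
case: (boolP (P x)) => Px /=.
  have := req_catl [:: x] (IH H'); by [].
apply: (@req_tr _ (x :: filter P w ++ filter (predC P) w)).
  have := req_catl [:: x] (IH H'); by [].
rewrite -cat_rcons.
have := req_catr (filter (predC P) w) (@req_letter_word x (filter P w) _); apply.
move=> y; rewrite mem_filter => /andP[Py yw].
have := H y x ltac:(by rewrite inE yw orbT) (mem_head _ _) Py Px.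
by rewrite eq_sym adj_sym.
Qed.

Lemma req_rot p s : req (p ++ s) [::] -> req (s ++ p) [::].
Proof.
move=> H.
apply: (@req_tr _ ((s ++ p) ++ (s ++ winv s))).
  have := req_symm (req_catl (s ++ p) (req_inv s)); rewrite cats0; by [].
have -> : (s ++ p) ++ s ++ winv s = s ++ (p ++ s) ++ winv s by rewrite !catA.
apply: req_tr (req_ctx _ _ H) _; exact: req_inv.
Qed.

Lemma cont_cat (u v : word V) : cont (u ++ v) = cont u :|: cont v.
Proof. by apply/setP => a; rewrite !inE has_cat. Qed.

Lemma cont_winv (w : word V) : cont (winv w) = cont w.
Proof. by apply/setP => a; rewrite !inE /winv has_rev has_map; apply: eq_has. Qed.

Lemma mem_cont (x : letter V) w : x \in w -> x.1 \in cont w.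
Proof. by move=> h; rewrite inE; apply/hasP; exists x. Qed.

Lemma adjacent_sub (P P' Q : {set V}) : P \subset P' -> adjacent adj P' Q -> adjacent adj P Q.
Proof.
move=> /subsetP sP /forallP H; apply/forallP => p; apply/implyP => hp.
exact: (implyP (H p) (sP _ hp)).
Qed.

Lemma adjacentP (P Q : {set V}) p q : adjacent adj P Q -> p \in P -> q \in Q -> (p == q) || adj p q.
Proof.
move=> /forallP H hp hq; have /forallP H2 := implyP (H p) hp; exact: (implyP (H2 q) hq).
Qed.

Lemma keyadj (U W : {set V}) x z : z \in nonadj_part adj U W -> x \in U :|: W ->
  x \notin nonadj_part adj U W -> x \notin nonadj_part adj W U -> (x == z) || adj x z.
Proof.
rewrite !inE => /andP[zU nz] xUW.
case xU: (x \in U) => /=.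
- move/negbNE => adjx _.
  case: (boolP ((x == z) || adj x z)) => // nxz; exfalso; move/negP: nz; apply.
  apply: adjacent_sub adjx; apply/subsetP => y; rewrite !inE => /andP[yU czy].
  rewrite yU /=; apply: connect_trans czy; apply: connect1.
  by rewrite /nadj_in xU zU /=; rewrite negb_or in nxz.
- move: xUW; rewrite xU /= => xW _; rewrite xW /= => /negbNE adjW.
  apply: adjacentP adjW _ zU; by rewrite inE xW connect0.
Qed.
End Helpers.

Theorem lemma6p12 (V : finType) (adj : rel V)
    (adj_sym : symmetric adj) (adj_irr : irreflexive adj)
    (wa wb : word V) :
  effcont adj (wa ++ wb ++ winv wa ++ winv wb)
    \subset bracket adj (cont wa) (cont wb).
Proof.
set g := wa ++ wb ++ winv wa ++ winv wb.
set A := cont wa; set Bc := cont wb; set B := bracket adj A Bc.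
have contg : cont g = A :|: Bc.
  rewrite /g !cont_cat !cont_winv; apply/setP => a; rewrite !inE; by case: (has _ wa); case: (has _ wb).
have BB : B \subset cont g.
  rewrite contg; apply/subsetP => a; rewrite !inE => /orP[] /andP[h _]; by rewrite h ?orbT.
have adjB : forall p q, p \in cont g -> p \notin B -> q \in B -> (p == q) || adj p q.
  move=> p q pg pB; move: pB; rewrite /B inE negb_or => /andP[n1 n2].
  rewrite inE => /orP[] hq.
  - by apply: (keyadj hq); rewrite -?contg.
  - by apply: (keyadj hq); rewrite // setUC -contg.
set P := fun x : letter V => x.1 \in B.
have commPB : forall x y, x \in g -> y \in g -> P x -> ~~ P y -> (x.1 == y.1) || adj x.1 y.1.
  move=> x y xg yg Px Py.
  have := adjB _ _ (mem_cont yg) Py Px; by rewrite eq_sym adj_sym.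
have filt_winv : forall w, filter (predC P) (winv w) = winv (filter (predC P) w).
  by move=> w; rewrite /winv filter_rev filter_map; congr rev; congr map; apply: eq_filter.
have gnil : raag_eq adj (filter (predC P) g) [::].
  rewrite /g !filter_cat !filt_winv.
  set fa := filter (predC P) wa; set fb := filter (predC P) wb.
  have Hc : raag_eq adj (fa ++ fb) (fb ++ fa).
    apply: req_comm => x y; rewrite !mem_filter /= => /andP[xB xa] /andP[_ yb].
    have xA : x.1 \in A := mem_cont xa.
    have yBc : y.1 \in Bc := mem_cont yb.
    move: xB; rewrite /P /B inE negb_or inE xA /= => /andP[/negbNE h _].
    apply: adjacentP h _ yBc; by rewrite inE xA connect0.
  rewrite catA.
  apply: req_tr (req_catr _ Hc) _.
  have -> : (fb ++ fa) ++ winv fa ++ winv fb = fb ++ (fa ++ winv fa) ++ winv fb by rewrite !catA.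
  apply: req_tr (req_ctx fb (winv fb) (req_inv adj fa)) _; exact: req_inv.
have rotok : forall k, rcont adj (rot k g) \subset B.
  move=> k; apply: bigcap_inf; apply/boolp.asboolP.
  exists (filter P (rot k g)); split; last exact: filter_all.
  apply: req_tr (req_filter adj_sym (P := P) _) _.
    by move=> x y; rewrite !mem_rot; apply: commPB.
  have : raag_eq adj (filter (predC P) (rot k g)) [::].
    rewrite /rot filter_cat; apply: req_rot; rewrite -filter_cat cat_take_drop; exact: gnil.
  move=> h; have := req_catl (filter P (rot k g)) h; by rewrite cats0.
apply: bigcap_inf.
apply/and3P; split => //.
  by apply/forallP => k; apply: rotok.
apply/forallP => p; apply/implyP; rewrite inE => /andP[pB pg].
apply/forallP => q; apply/implyP => qB; exact: adjB.
Qed.
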